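(* Let $G$ be a graph and let $H$ be an induced subdivision of the $1$-pan in $G$ having the minimum number of vertices among all induced subdivisions of the $1$-pan in $G$. Write $H=(u,C)$, where $u$ is the vertex of degree $1$ of $H$ and $C$ is the cycle of $H$. If $|V(C)|\ge 5$, then every vertex of $V(G)\setminus V(H)$ has at most one neighbor in $V(C)$.
   Context: All graphs are finite and simple. An induced subdivision of a graph $F$ in $G$ is an induced subgraph of $G$ isomorphic to a graph obtained from $F$ by repeatedly replacing edges by paths of length $2$ through new vertices. The $1$-pan is the graph obtained from a triangle by adding a new vertex adjacent to exactly one vertex of the triangle; an induced subdivision of it consists of an induced cycle $C$ and one further vertex $u$ adjacent to exactly one vertex of $C$. *)

(* Defs.v *)
From mathcomp Require Import all_boot.
Set Implicit Arguments. Unset Strict Implicit. Unset Printing Implicit Defensive.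

(* A simple graph: vertex type T : finType, adjacency e : rel T that is
   symmetric and irreflexive (these are hypotheses of the theorem). *)

Definition induced_cycle (T : finType) (e : rel T) (c : seq T) : bool :=
  [&& uniq c, 3 <= size c &
      all (fun x => all (fun y => e x y == (y == next c x) || (x == next c y)) c) c].

Definition pan_subdiv (T : finType) (e : rel T) (u : T) (c : seq T) : bool :=
  [&& induced_cycle e c, u \notin c & count (e u) c == 1].

Definition pan_size (T : finType) (c : seq T) : nat := (size c).+1.

(* Main.v *)
Require Import Defs.
From mathcomp Require Import all_boot zify.
Set Implicit Arguments. Unset Strict Implicit. Unset Printing Implicit Defensive.

Definition cadj n i j := [|| j == i.+1, i == j.+1, (i == 0) && (j == n.-1) | (j == 0) && (i == n.-1)].

Lemma next_nth_idx (T : eqType) (x0 : T) s i : uniq s -> i < size s ->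
  next s (nth x0 s i) = nth x0 s (if i.+1 < size s then i.+1 else 0).
Proof.
move=> Us Hi; rewrite next_nth mem_nth // index_uniq //.
case: s Us Hi => [|y p] //= Us Hi.
case: ltnP => H /=; first by apply: set_nth_default.
by rewrite nth_default //; lia.
Qed.

Lemma IC_use (T : finType) (e : rel T) s x0 : induced_cycle e s ->
  forall i j, i < size s -> j < size s -> e (nth x0 s i) (nth x0 s j) = cadj (size s) i j.
Proof.
move=> /and3P [U S3 A] i j Hi Hj.
move: A => /(all_nthP x0) /(_ i Hi) /(all_nthP x0) /(_ j Hj) /eqP ->.
rewrite !next_nth_idx //.
have Hi' : (if i.+1 < size s then i.+1 else 0) < size s by case: ifP; lia.
have Hj' : (if j.+1 < size s then j.+1 else 0) < size s by case: ifP; lia.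
rewrite !nth_uniq // /cadj. clear Hi' Hj'; move: (size s) S3 Hi Hj => n *; case: ifP; case: ifP; lia.
Qed.

Lemma IC_build (T : finType) (e : rel T) s x0 : uniq s -> 3 <= size s ->
  (forall i j, i < size s -> j < size s -> e (nth x0 s i) (nth x0 s j) = cadj (size s) i j) ->
  induced_cycle e s.
Proof.
move=> U S3 A; rewrite /induced_cycle U S3 /=.
apply/(all_nthP x0) => i Hi; apply/(all_nthP x0) => j Hj.
rewrite A // !next_nth_idx //.
have Hi' : (if i.+1 < size s then i.+1 else 0) < size s by case: ifP; lia.
have Hj' : (if j.+1 < size s then j.+1 else 0) < size s by case: ifP; lia.
rewrite !nth_uniq // /cadj; apply/eqP; clear Hi' Hj' A; move: (size s) S3 Hi Hj => n *; case: ifP; case: ifP; lia.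
Qed.

Lemma rot_IC (T : finType) (e : rel T) s k : induced_cycle e s -> induced_cycle e (rot k s).
Proof.
move=> /and3P [U S3 A]; rewrite /induced_cycle rot_uniq U size_rot S3 /=.
apply/allP => x; rewrite mem_rot => Hx; apply/allP => y; rewrite mem_rot => Hy.
rewrite !next_rot //.
by move/allP: A => /(_ x Hx) /allP /(_ y Hy).
Qed.

Lemma nth_rot1 (T : Type) (x0 : T) s k i : k <= size s -> i + k < size s ->
  nth x0 (rot k s) i = nth x0 s (i + k).
Proof.
move=> Hk Hi; rewrite /rot nth_cat size_drop ifT; last lia.
by rewrite nth_drop addnC.
Qed.

Lemma nth_rot2 (T : Type) (x0 : T) s k i : k <= size s -> size s <= i + k -> i < size s ->
  nth x0 (rot k s) i = nth x0 s (i + k - size s).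
Proof.
move=> Hk Hi Hi2; rewrite /rot nth_cat size_drop ifF; last lia.
rewrite nth_take; last lia. congr nth; lia.
Qed.

Lemma all_rot' (T : Type) (a : pred T) s k : all a (rot k s) = all a s.
Proof. by rewrite /rot all_cat andbC -all_cat cat_take_drop. Qed.

Lemma count_rot' (T : Type) (a : pred T) s k : count a (rot k s) = count a s.
Proof. by rewrite /rot count_cat addnC -count_cat cat_take_drop. Qed.

Lemma count2 (T : Type) (x0 : T) (a : pred T) s i j : i < j -> j < size s ->
  a (nth x0 s i) -> a (nth x0 s j) -> 2 <= count a s.
Proof.
elim: s i j => [|x s IH] i j //= Hij Hj.
case: i Hij => [|i] Hij /=.
  move=> -> Haj; case: j Hij Hj Haj => [|j] // _ Hj Haj.
  have : has a s by apply/(has_nthP x0); exists j.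
  by rewrite has_count; lia.
case: j Hij Hj => [|j] // Hij Hj Hai Haj.
have := IH i j Hij Hj Hai Haj; lia.
Qed.

Lemma count2_inv (T : Type) (x0 : T) (a : pred T) s : 2 <= count a s ->
  exists i j, [/\ i < j, j < size s, a (nth x0 s i) & a (nth x0 s j)].
Proof.
elim: s => [|x s IH] //=.
case Hx: (a x) => /= H.
  have : has a s by rewrite has_count; lia.
  case/(has_nthP x0) => j Hj Haj.
  by exists 0, j.+1.
case: (IH H) => i [j [Hij Hj Hai Haj]].
by exists i.+1, j.+1.
Qed.

Lemma count1 (T : Type) (x0 : T) (a : pred T) s k : k < size s ->
  (forall i, i < size s -> a (nth x0 s i) = (i == k)) -> count a s = 1.
Proof.
elim: s k => [|x s IH] k //= Hk H.
case: k Hk H => [|k] Hk H.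
  have -> : a x by have := H 0; apply.
  suff : ~~ has a s by rewrite has_count; lia.
  apply/negP => /(has_nthP x0) [j Hj Haj].
  by have := H j.+1 Hj; rewrite Haj.
have -> : a x = false by have := H 0; apply.
rewrite (IH k) //; move=> i Hi; exact: (H i.+1).
Qed.

Lemma tri_pan (T : finType) (e : rel T) (e_sym : symmetric e) (e_irr : irreflexive e)
  x y z p : x != y -> y != z -> x != z -> e x y -> e y z -> e x z ->
  p != x -> p != y -> p != z -> e p x + e p y + e p z = 1 ->
  pan_subdiv e p [:: x; y; z].
Proof.
move=> nxy nyz nxz exy eyz exz npx npy npz C.
apply/and3P; split.
- apply: (IC_build (x0:=x)) => //=.
    by rewrite !inE negb_or nxy nxz nyz.
  move=> i j Hi Hj.
  case: i Hi => [|[|[|i]]] // _; case: j Hj => [|[|[|j]]] // _ /=;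
    rewrite ?e_irr // ?(e_sym y x) ?(e_sym z x) ?(e_sym z y) //.
- by rewrite !inE !negb_or npx npy npz.
- by rewrite /= addn0 addnA C.
Qed.

Ltac purge := repeat match goal with
 | H : is_true ?b |- _ => lazymatch b with
     | context [nth _ _ _] => clear H | context [count _ _] => clear H
     | context [all _ _] => clear H | context [_ \in _] => clear H
     | context [uniq _] => clear H | context [induced_cycle _ _] => clear H
     | context [has _ _] => clear H end
 | H : ?a = ?b |- _ => lazymatch type of a with bool => clear H end
 | H : ?a = ?b |- _ => lazymatch a with count _ _ => clear H end
 end.
Ltac slia := purge; lia.

Theorem mainTheorem13 (T : finType) (e : rel T)
  (e_sym : symmetric e) (e_irr : irreflexive e)
  (u : T) (c : seq T)
  (H : pan_subdiv e u c)
  (Hmin : forall (u' : T) (c' : seq T), pan_subdiv e u' c' ->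
            pan_size c <= pan_size c')
  (Hc5 : 5 <= size c) :
  forall v : T, v \notin c -> v != u -> count (e v) c <= 1.
Proof.
move=> v vnc nvu; rewrite leqNgt; apply/negP => C2.
case/and3P: H => ICc unc /eqP Cu.
have Uc : uniq c by case/and3P: ICc.
have small : forall p D, pan_subdiv e p D -> size D < size c -> False.
  by move=> p D HD; have := Hmin p D HD; rewrite /pan_size; slia.
move: Hc5 small Cu C2; set n := size c => Hc5 small Cu C2.
have adjc := IC_use u ICc; rewrite -/n in adjc.
have ninc : forall x k, x \notin c -> k < n -> (nth u c k == x) = false.
  by move=> x k xn Hk; apply/eqP => E; move: xn; rewrite -E mem_nth.
case Hall: (all (e v) c).
- have : has (e u) c by rewrite has_count Cu.
  case/(has_nthP u) => j Hj euj.
  have nu : forall k, k < n -> k != j -> e u (nth u c k) = false.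
    move=> k Hk Hkj; apply/negP => euk.
    case: (ltngtP k j) => [lt|gt|eq].
    + by have := count2 lt Hj euk euj; rewrite Cu.
    + by have := count2 gt Hk euj euk; rewrite Cu.
    + by rewrite eq eqxx in Hkj.
  have allv : forall k, k < n -> e v (nth u c k) by move/(all_nthP u): Hall.
  case Euv: (e u v).
  + pose q := if j.+2 < n then j.+2 else j - 2.
    have Hq : q < n by rewrite /q; case: ifP; slia.
    have Hqj : q != j by rewrite /q; case: ifP; slia.
    have Cqj : cadj n q j = false by rewrite /q /cadj; case: ifP; slia.
    apply: (small (nth u c q) [:: u; v; nth u c j]); last by rewrite /=; slia.
    apply: tri_pan => //.
    * by rewrite eq_sym.
    * by rewrite eq_sym ninc.
    * by rewrite eq_sym ninc.
    * exact: allv.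
    * by rewrite ninc.
    * by rewrite ninc.
    * by rewrite nth_uniq.
    * by rewrite e_sym nu // (e_sym _ v) allv // adjc // Cqj.
  + pose r := if j.+1 < n then j.+1 else j.-1.
    have Hr : r < n by rewrite /r; case: ifP; slia.
    have Hrj : r != j by rewrite /r; case: ifP; slia.
    have Cjr : cadj n j r by rewrite /r /cadj; case: ifP; slia.
    apply: (small u [:: v; nth u c j; nth u c r]); last by rewrite /=; slia.
    apply: tri_pan => //.
    * by rewrite eq_sym ninc.
    * by rewrite nth_uniq // eq_sym.
    * by rewrite eq_sym ninc.
    * exact: allv.
    * by rewrite adjc.
    * exact: allv.
    * by rewrite eq_sym.
    * by rewrite eq_sym ninc.
    * by rewrite eq_sym ninc.
    * by rewrite Euv euj nu.
- have claim : forall g c', induced_cycle e c' -> size c' = n -> v \notin c' ->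
      all (e v) c' = false -> 0 < g < n -> e v (nth u c' 0) -> e v (nth u c' g) -> False.
    elim/ltn_ind => g IH c' IC' Sc' vnc' Hall' Hg ev0 evg.
    have adj' := IC_use u IC'; rewrite Sc' in adj'.
    have Uc' : uniq c' by case/and3P: IC'.
    have ninc' : forall x k, x \notin c' -> k < n -> (nth u c' k == x) = false.
      by move=> x k xn Hk; apply/eqP => E; move: xn; rewrite -E mem_nth // Sc'.
    have nuq : forall i j, i < n -> j < n -> (nth u c' i == nth u c' j) = (i == j).
      by move=> i j Hi Hj; rewrite nth_uniq // Sc'.
    case: (eqVneq g 1) => [g1|gn1].
    + subst g.
      have exk : exists k, (k < n) && ~~ e v (nth u c' k).
        move/negbT: Hall'; rewrite -has_predC => /(has_nthP u) [k Hk Hn].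
        by exists k; rewrite -Sc' Hk.
      case: (ex_minnP exk) => k /andP [Hk nvk] kmin.
      have k0 : k != 0 by apply/eqP => E; rewrite E ev0 in nvk.
      have k1 : k != 1 by apply/eqP => E; rewrite E evg in nvk.
      have ev1 : e v (nth u c' k.-1).
        case E: (e v (nth u c' k.-1)) => //.
        have : k <= k.-1 by apply: kmin; rewrite E andbT; slia.
        slia.
      have ev2 : e v (nth u c' k.-2).
        case E: (e v (nth u c' k.-2)) => //.
        have : k <= k.-2 by apply: kmin; rewrite E andbT; slia.
        slia.
      apply: (small (nth u c' k) [:: v; nth u c' k.-2; nth u c' k.-1]); last by rewrite /=; slia.
      apply: tri_pan => //.
      * by rewrite eq_sym ninc' //; slia.
      * by rewrite nuq; slia.
      * by rewrite eq_sym ninc' //; slia.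
      * by rewrite adj' /cadj; slia.
      * by apply/eqP => E; move: vnc'; rewrite -E mem_nth // Sc'.
      * by rewrite nuq; slia.
      * by rewrite nuq; slia.
      * rewrite e_sym (negbTE nvk) !adj' /cadj; slia.
    + have nvl : e v (nth u c' n.-1) = false.
        apply/negP => evl.
        apply: (IH 1 _ (rot n.-1 c')); first slia.
        * exact: rot_IC.
        * by rewrite size_rot.
        * by rewrite mem_rot.
        * by rewrite all_rot'.
        * slia.
        * rewrite nth_rot1; [by rewrite add0n| rewrite Sc'; slia | rewrite Sc'; slia].
        * rewrite nth_rot2; [|rewrite Sc'; slia|rewrite Sc'; slia|rewrite Sc'; slia].
          by rewrite Sc' (_ : 1 + n.-1 - n = 0) //; slia.
      have g2 : g + g <= n.
        rewrite leqNgt; apply/negP => lt.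
        apply: (IH (n - g) _ (rot g c')); first slia.
        * exact: rot_IC.
        * by rewrite size_rot.
        * by rewrite mem_rot.
        * by rewrite all_rot'.
        * slia.
        * rewrite nth_rot1; [by rewrite add0n| rewrite Sc'; slia | rewrite Sc'; slia].
        * rewrite nth_rot2; [|rewrite Sc'; slia|rewrite Sc'; slia|rewrite Sc'; slia].
          by rewrite Sc' (_ : n - g + g - n = 0) //; slia.
      have mid : forall k, 0 < k < g -> e v (nth u c' k) = false.
        move=> k Hk; apply/negP => evk.
        by apply: (IH k _ c'); try slia.
      pose D := v :: take g.+1 c'.
      have sD : size D = g.+2 by rewrite /= size_take Sc' ifT //; slia.
      have nthDS : forall k, k <= g -> nth u D k.+1 = nth u c' k.
        by move=> k Hk; rewrite /= nth_take.
      apply: (small (nth u c' n.-1) D); last by rewrite sD; slia.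
      apply/and3P; split.
      * apply: (IC_build (x0:=u)).
        -- rewrite /D /= take_uniq // andbT; apply/negP => /mem_take.
           by apply/negP.
        -- by rewrite sD; slia.
        -- move=> i j; rewrite sD => Hi Hj.
           case: i Hi => [|i] Hi; case: j Hj => [|j] Hj.
           ++ by rewrite e_irr /cadj; slia.
           ++ rewrite nthDS; last slia.
              rewrite /=.
              have [->|jn0] := eqVneq j 0; first by rewrite ev0 /cadj; slia.
              have [->|jng] := eqVneq j g; first by rewrite evg /cadj; slia.
              by rewrite mid /cadj; slia.
           ++ rewrite nthDS; last slia.
              rewrite /= e_sym.
              have [->|in0] := eqVneq i 0; first by rewrite ev0 /cadj; slia.
              have [->|ing] := eqVneq i g; first by rewrite evg /cadj; slia.
              by rewrite mid /cadj; slia.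
           ++ rewrite !nthDS; try slia.
              by rewrite adj' /cadj; slia.
      * rewrite inE negb_or ninc' //=; last slia.
        apply/negP => /(nthP u) [k Hk E].
        rewrite size_take Sc' ifT in Hk; last slia.
        rewrite nth_take // in E.
        by move/eqP: E; rewrite nuq; slia.
      * apply/eqP; apply: (count1 (x0:=u) (k:=1)); first by rewrite sD.
        move=> i; rewrite sD => Hi.
        case: i Hi => [|i] Hi; first by rewrite /= e_sym nvl.
        by rewrite nthDS; try slia; rewrite adj' /cadj; slia.
  case: (count2_inv u C2) => i [j [Hij Hj evi evj]].
  apply: (claim (j - i) (rot i c)).
  + exact: rot_IC.
  + by rewrite size_rot.
  + by rewrite mem_rot.
  + by rewrite all_rot'.
  + slia.
  + rewrite nth_rot1; [by rewrite add0n| slia | slia].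
  + rewrite nth_rot1; [|slia|slia].
    by rewrite (_ : j - i + i = j) //; slia.
Qed.
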